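(* Let $M$ be a set of machines and $J$ a set of jobs with $|J|\le|M|^c$. Let $L$ and $l$ be integers with $2|M|^c\ge L\ge C(J)+D(J)$ and $l\ge 150c\ln|M|/\ln\ln|M|$. Then the probability that a uniformly random hash function $h:M^*\times I\to\{0,\dots,L-1\}$ is not $(L,l)$-good for $J$ is at most $\exp(-|J|\ln(l)/8)$.
   Context: Jobs: each job $j$ has a machine sequence $\mathrm{seq}(j)\in M^*$ (finite sequence of machines) and a unique identifier $\mathrm{ind}(j)\in I:=\{1,\dots,|M|^c\}$, where $c\ge1$ is a constant. Standing assumption: $|M|\ge32$. $C(J)=\max_{m\in M}\sum_{j\in J}|\{i:\mathrm{seq}(j)_i=m\}|$, $D(J)=\max_j\mathrm{len}(\mathrm{seq}(j))$. For $h$, write $h(j):=h(\mathrm{seq}(j),\mathrm{ind}(j))$ and $\mathrm{virt}(j,i)=h(j)+i$ for $i<\mathrm{len}(\mathrm{seq}(j))$ ($\infty$ if $i=\mathrm{len}(\mathrm{seq}(j))$). A bad pattern (for $M,L,l,J$) is a collection of sets $B_{T,m}$, for $0\le T<2L$ and $m\in M$, of pairs $(j,i)$ with $j\in J$, such that $\mathrm{seq}(j)_i=m$ for all $(j,i)\in B_{T,m}$; each $j$ appears at most once in $\bigsqcup B_{T,m}$; $|B_{T,m}|\in\{0\}\cup(l,|J|]$ for all $(T,m)$; and $\sum_{T,m}|B_{T,m}|>|J|/2$. It occurs for $h$ if $\mathrm{virt}(j,i)=T$ for all $(T,m)$ and $(j,i)\in B_{T,m}$. $h$ is $(L,l)$-good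 for $J$ if no bad pattern occurs for $h$. *)

(* Defs.v *)
From Stdlib Require Import Reals ClassicalEpsilon.
From mathcomp Require Import all_boot.


(* Jobs are the elements of a finite type [T] (this is the set J);
   [sq j] is seq(j) in M^*. *)

Definition congestion {M T : finType} (sq : T -> seq M) : nat :=
  \max_(m : M) \sum_(j : T) count_mem m (sq j).

Definition dilation {M T : finType} (sq : T -> seq M) : nat :=
  \max_(j : T) size (sq j).

(* A bad pattern: sets B_{t,m} (0 <= t < 2L, m in M) of pairs (j,i).
   Since seq(j)_i = m forces i < len(seq j) <= D(J), indices i are taken
   in 'I_(D(J)). *)
Definition bad_pattern {M T : finType} (sq : T -> seq M) (L : nat) (l : nat)
    (B : 'I_(2 * L) -> M -> {set T * 'I_(dilation sq)}) : Prop :=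
  [/\ (forall t m p, p \in B t m ->
         (p.2 < size (sq p.1))%N /\ nth m (sq p.1) p.2 = m),
      (forall t m t' m' p p', p \in B t m -> p' \in B t' m' -> p.1 = p'.1 ->
         [/\ t = t', m = m' & p = p']),
      (forall t m, #|B t m| = 0 \/ (l < #|B t m| <= #|T|)%N)
    & (#|T| < 2 * \sum_(t : 'I_(2 * L)) \sum_(m : M) #|B t m|)%N].

(* The pattern occurs for h (hv j = h(j) = h(seq j, ind j)):
   virt(j,i) = h(j) + i = t for all (j,i) in B_{t,m}
   (i < len(seq j), so virt is finite). *)
Definition pattern_occurs {M T : finType} (sq : T -> seq M) (L : nat)
    (hv : T -> nat) (B : 'I_(2 * L) -> M -> {set T * 'I_(dilation sq)}) : Prop :=
  forall t m p, p \in B t m -> (hv p.1 + p.2)%N = t.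

Definition good {M T : finType} (sq : T -> seq M) (L l : nat) (hv : T -> nat) : Prop :=
  ~ (exists B, bad_pattern sq L l B /\ pattern_occurs sq L hv B).

Definition goodb {M T : finType} (sq : T -> seq M) (L l : nat)
    (f : {ffun T -> 'I_L}) : bool :=
  if excluded_middle_informative (good sq L l (fun j => nat_of_ord (f j)))
  then true else false.

(* Since identifiers are unique, the keys (seq j, ind j) are pairwise
   distinct, so the values h(j) of a uniform random h : M^* x I -> [0,L)
   are i.i.d. uniform in [0,L); the event depends only on these values. *)
Definition prob_not_good {M T : finType} (sq : T -> seq M) (L l : nat) : R :=
  Rdiv (INR #|[set f : {ffun T -> 'I_L} | ~~ goodb sq L l f]|) (INR (L ^ #|T|)).

(* Main.v *)
Require Import Defs.
From Stdlib Require Import Reals ClassicalEpsilon Classical Lra.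
From mathcomp Require Import all_boot all_algebra.
Local Open Scope R_scope.

Lemma ln_le_mono x y : 0 < x -> x <= y -> ln x <= ln y.
Proof.
move=> Hx Hxy; case: (Rle_lt_or_eq_dec _ _ Hxy) => H.
  by left; apply: ln_increasing.
by rewrite H; right.
Qed.

Lemma ln_le_rev x y : 0 < x -> 0 < y -> ln x <= ln y -> x <= y.
Proof.
move=> Hx Hy H; apply: Rnot_lt_le => Hlt.
have := ln_increasing _ _ Hy Hlt; lra.
Qed.

Lemma ln_le_x1 x : 0 < x -> ln x <= x - 1.
Proof.
move=> Hx; have H := exp_ineq1_le (x - 1).
rewrite -[X in _ <= X](ln_exp (x - 1)); apply: ln_le_mono => //; lra.
Qed.

Lemma exp1_ge2 : 2 <= exp 1.
Proof. have := exp_ineq1_le 1; lra. Qed.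

Lemma ln_le_half x : 0 < x -> ln x <= x / 2.
Proof.
move=> Hx; have He := exp1_ge2; have Hep : 0 < exp 1 by lra.
have H1 : 0 < x / exp 1 by apply: Rdiv_lt_0_compat.
have H2 := ln_le_x1 _ H1.
rewrite /Rdiv ln_mult // in H2; last by apply: Rinv_0_lt_compat.
rewrite ln_Rinv // ln_exp in H2.
have H3 : x * / exp 1 <= x / 2.
  apply: Rmult_le_compat_l; first lra.
  apply: Rinv_le_contravar; lra.
rewrite /Rdiv in H3; lra.
Qed.

Lemma exp_nat n : exp (INR n) = exp 1 ^ n.
Proof.
elim: n => [|n IH]; first by rewrite /= exp_0.
by rewrite S_INR exp_plus IH /= Rmult_comm.
Qed.

Lemma INR_fact k : INR (k.+1)`! = INR k.+1 * INR k`!.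
Proof. by rewrite factS mulnE mult_INR. Qed.

Lemma lnfact k : INR k * ln (INR k) - INR k <= ln (INR k`!).
Proof.
elim: k => [|k IH]; first by rewrite /= Rmult_0_l ln_1; lra.
have Hk0 : 0 <= INR k by apply: pos_INR.
have Hk1 : 0 < INR k.+1 by apply: lt_0_INR; apply/ltP.
have Hf : 0 < INR k`! by apply: lt_0_INR; apply/ltP; apply: fact_gt0.
rewrite INR_fact ln_mult //.
have Hstep : INR k * ln (INR k.+1) <= INR k * ln (INR k) + 1.
  case: (posnP k) => [->|Hk]; first by rewrite /= !Rmult_0_l; lra.
  have Hkp : 0 < INR k by apply: lt_0_INR; apply/ltP.
  have Hq : 0 < INR k.+1 / INR k by apply: Rdiv_lt_0_compat.
  have := ln_le_x1 _ Hq.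
  rewrite /Rdiv ln_mult // ?ln_Rinv //; last by apply: Rinv_0_lt_compat.
  rewrite S_INR => H.
  have E : (INR k + 1) * / INR k - 1 = / INR k by field; lra.
  rewrite E in H.
  have : INR k * (ln (INR k + 1) + - ln (INR k)) <= INR k * / INR k.
    by apply: Rmult_le_compat_l => //; lra.
  rewrite Rinv_r; last lra.
  lra.
rewrite S_INR in Hstep Hk1 *; lra.
Qed.

Lemma INR_lit n : INR n = IZR (Z.of_nat n).
Proof. exact: INR_IZR_INZ. Qed.

Lemma a_facts N : (32 <= N)%N ->
  1 < ln (INR N) /\ 0 < ln (ln (INR N)) /\ ln (ln (INR N)) <= ln (INR N) / 2.
Proof.
move=> HN.
have H32 : 32 <= INR N by rewrite -[32]/(IZR (Z.of_nat 32)) -INR_lit; apply: le_INR; apply/leP.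
have He := exp_le_3.
have Ha : 1 < ln (INR N).
  rewrite -[1](ln_exp 1); apply: ln_increasing; [apply: exp_pos | lra].
have Hb : 0 < ln (ln (INR N)) by rewrite -ln_1; apply: ln_increasing; lra.
split => //; split => //; apply: ln_le_half; lra.
Qed.

Lemma l_big (N c l : nat) : (1 <= c)%N -> (32 <= N)%N ->
  150 * INR c * ln (INR N) / ln (ln (INR N)) <= INR l -> 300 * INR c <= INR l.
Proof.
move=> Hc HN Hl; have [Ha [Hb Hab]] := a_facts N HN.
have Hc0 : 0 <= INR c by apply: pos_INR.
set a := ln (INR N) in Ha Hb Hab Hl; set b := ln a in Hb Hab Hl.
apply: Rle_trans Hl.
have H1 : 300 * INR c * b <= 150 * INR c * a.
  have : 0 <= INR c * (a - 2 * b) by apply: Rmult_le_pos; lra.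
  lra.
have Hbi : 0 < / b by apply: Rinv_0_lt_compat.
have := Rmult_le_compat_r _ _ _ (Rlt_le _ _ Hbi) H1.
have -> : 300 * INR c * b * / b = 300 * INR c by field; lra.
by rewrite /Rdiv.
Qed.

Lemma INR_expn m n : INR (m ^ n)%N = INR m ^ n.
Proof. by elim: n => [|n IH] //; rewrite expnS mulnE mult_INR IH. Qed.

Lemma INR_muln m n : INR (m * n)%N = INR m * INR n.
Proof. by rewrite mulnE mult_INR. Qed.

Lemma bigcond (N c l q : nat) : (1 <= c)%N -> (32 <= N)%N ->
  150 * INR c * ln (INR N) / ln (ln (INR N)) <= INR l ->
  (q ^ 8 <= 52 * l)%N ->
  (N ^ (4 * c) * q ^ (2 * l.+1) <= (l.+1)`!)%N.
Proof.
move=> Hc HN Hl Hq8.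
case: (posnP q) => [->|Hq]; first by rewrite exp0n ?muln0 // muln_gt0.
have [Ha [Hb Hab]] := a_facts N HN.
have Hl300 := l_big N c l Hc HN Hl.
have Hc1 : 1 <= INR c by rewrite -[1]/(INR 1); apply: le_INR; apply/leP.
have HN0 : 0 < INR N by apply: lt_0_INR; apply/ltP; apply: leq_trans HN.
have Hq0 : 0 < INR q by apply: lt_0_INR; apply/ltP.
have Hl0 : 0 < INR l by lra.
set K := INR l.+1.
have HK : K = INR l + 1 by rewrite /K S_INR.
have HK0 : 0 < K by lra.
apply/leP; apply: INR_le; apply: ln_le_rev.
- rewrite INR_muln !INR_expn; apply: Rmult_lt_0_compat; apply: pow_lt => //.
- by apply: lt_0_INR; apply/ltP; apply: fact_gt0.
rewrite INR_muln !INR_expn ln_mult; try (apply: pow_lt => //).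
rewrite !ln_pow // (INR_muln 4) (INR_muln 2).
set a := ln (INR N) in Ha Hb Hab Hl *; set b := ln a in Hb Hab Hl.
have Hq8R : 8 * ln (INR q) <= 6 + ln (INR l).
  have H1 : INR q ^ 8 <= 52 * INR l.
    have := le_INR _ _ (elimT leP Hq8); rewrite INR_expn INR_muln.
    by rewrite [INR 52]INR_lit /=.
  have He6 : 64 <= exp 6.
    have := exp_nat 6; rewrite [INR 6]INR_lit /= => ->.
    have H2 := exp1_ge2.
    have : 2 ^ 6 <= exp 1 ^ 6 by apply: pow_incr; lra.
    simpl; lra.
  have H2 : INR q ^ 8 <= exp 6 * INR l by nra.
  have := ln_le_mono _ _ (pow_lt _ 8 Hq0) H2.
  rewrite ln_pow // ln_mult ?ln_exp //; last exact: exp_pos.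
  by rewrite [INR 8]INR_lit /=.
have HlK : ln (INR l) <= ln K by apply: ln_le_mono => //; lra.
have HlnK5 : 5 <= ln K.
  have H5 : exp 5 <= K.
    have := exp_nat 5; rewrite [INR 5]INR_lit /= => ->.
    have H3 := exp_le_3; have H0 := exp_pos 1.
    have : exp 1 ^ 5 <= 3 ^ 5 by apply: pow_incr; lra.
    simpl; lra.
  by rewrite -[5](ln_exp 5); apply: ln_le_mono => //; apply: exp_pos.
have HKlnK : 75 * INR c * a <= K * ln K.
  have Hab0 : 0 < a / b by apply: Rdiv_lt_0_compat; lra.
  have HK1 : a / b <= K.
    apply: Rle_trans (_ : 150 * INR c * a / b <= K); last lra.
    rewrite /Rdiv; apply: Rmult_le_compat_r; first by left; apply: Rinv_0_lt_compat.
    nra.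
  have HlnK : b / 2 <= ln K.
    have := ln_le_mono _ _ Hab0 HK1.
    rewrite /Rdiv ln_mult; try lra; last by apply: Rinv_0_lt_compat.
    rewrite ln_Rinv //.
    rewrite -/b => H; have := ln_le_half _ Hb; lra.
  have HK2 : 150 * INR c * a / b <= K by lra.
  have : 150 * INR c * a / b * (b / 2) <= K * ln K.
    apply: Rmult_le_compat => //; try lra.
    rewrite /Rdiv; apply: Rmult_le_pos; try (left; apply: Rinv_0_lt_compat; lra).
    nra.
  have -> : 150 * INR c * a / b * (b / 2) = 75 * INR c * a by field; lra.
  done.
have HF := lnfact l.+1.
rewrite -/K in HF.
have H8 : K * (8 * ln (INR q)) <= K * (6 + ln K).
  apply: Rmult_le_compat_l; lra.
have H5 : K * 5 <= K * ln K by apply: Rmult_le_compat_l; lra.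
have Hca : 0 <= INR c * a by apply: Rmult_le_pos; lra.
have E4 : INR 4 = 4 by rewrite INR_lit.
have E2 : INR 2 = 2 by rewrite INR_lit.
rewrite E4 E2.
rewrite -/K.
lra.
Qed.

Lemma exp_le_mono x y : x <= y -> exp x <= exp y.
Proof.
move=> H; case: (Rle_lt_or_eq_dec _ _ H) => H1; first by left; apply: exp_increasing.
by rewrite H1; right.
Qed.

Lemma final_real (bad n q L l : nat) : (bad * q ^ n <= 2 * L ^ n)%N ->
  (2 * l <= q ^ 8)%N -> (8 <= n)%N -> (0 < L)%N -> (1 <= l)%N ->
  INR bad / INR (L ^ n)%N <= exp (- (INR n * ln (INR l)) / 8).
Proof.
move=> Hb Hq Hn HL Hl.
have Hq0 : (0 < q)%N.
  case: (posnP q) Hq => [->|] //; rewrite exp0n //; case: l Hl => //.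
have HQ : 0 < INR q by apply: lt_0_INR; apply/ltP.
have HLn : 0 < INR (L ^ n)%N by apply: lt_0_INR; apply/ltP; rewrite expn_gt0 HL.
have Hl0 : 0 < INR l by apply: lt_0_INR; apply/ltP.
have Hn8 : 8 <= INR n.
  have := le_INR _ _ (elimT leP Hn); rewrite [INR 8]INR_lit /=; done.
have HQn : 0 < INR q ^ n by apply: pow_lt.
set E := exp (- (INR n * ln (INR l)) / 8).
have HbR : INR bad * INR q ^ n <= 2 * INR (L ^ n)%N.
  have := le_INR _ _ (elimT leP Hb); rewrite !INR_muln INR_expn.
  by have -> : INR 2 = 2 by rewrite INR_lit.
have H8 : ln 2 + ln (INR l) <= 8 * ln (INR q).
  have := le_INR _ _ (elimT leP Hq); rewrite INR_muln INR_expn.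
  have -> : INR 2 = 2 by rewrite INR_lit.
  move=> H; have := ln_le_mono _ _ (Rmult_lt_0_compat _ _ Rlt_0_2 Hl0) H.
  rewrite ln_mult //; last exact: Rlt_0_2.
  by rewrite ln_pow // [INR 8]INR_lit /=.
have Hln2 := ln_lt_2.
have Hprod : INR n * (ln 2 + ln (INR l)) <= INR n * (8 * ln (INR q)).
  by apply: Rmult_le_compat_l; lra.
have H2 : 2 <= E * INR q ^ n.
  have -> : INR q ^ n = exp (INR n * ln (INR q)) by rewrite -ln_pow // exp_ln.
  rewrite /E -exp_plus -[2]exp_ln; last lra.
  apply: exp_le_mono.
  have : 8 * ln 2 <= INR n * ln 2 by apply: Rmult_le_compat_r; lra.
  lra.
have HE : 0 < E by apply: exp_pos.
have H3 : INR bad * INR q ^ n <= E * INR (L ^ n)%N * INR q ^ n.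
  apply: Rle_trans HbR _.
  have := Rmult_le_compat_r _ _ _ (Rlt_le _ _ HLn) H2; lra.
have H4 : INR bad <= E * INR (L ^ n)%N.
  by apply: (Rmult_le_reg_r (INR q ^ n)).
rewrite /Rdiv; apply: (Rmult_le_reg_r (INR (L ^ n)%N)) => //.
rewrite Rmult_assoc Rinv_l; lra.
Qed.

Lemma poly_bound (N c L : nat) : (1 <= c)%N -> (32 <= N)%N -> (L <= 2 * N ^ c)%N ->
  (4 * L * L.+1 * N <= N ^ (4 * c))%N.
Proof.
move=> Hc HN HL.
set P := (N ^ c)%N.
have HN0 : (0 < N)%N by apply: leq_trans HN.
have HP : (1 <= P)%N by rewrite expn_gt0 HN0.
have HL1 : (L.+1 <= 3 * P)%N.
  apply: (@leq_trans (2 * P).+1); first by rewrite ltnS.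
  by rewrite -addn1 mulSn addnC leq_add2r.
apply: (@leq_trans (4 * (2 * P) * (3 * P) * N)).
  by rewrite !leq_mul.
apply: (@leq_trans (N * P * P * N)).
  rewrite !mulnA -[X in (_ <= X)%N]mulnA -[X in (_ <= X)%N]mulnA.
  have -> : (4 * 2 * P * 3 * P * N = 24 * (P * (P * N)))%N.
    by rewrite -!mulnA; rewrite !(mulnCA P) !mulnA.
  by rewrite leq_mul2r; apply/orP; right; apply: leq_trans HN.
have -> : (N * P * P * N = N ^ (2 * c + 2))%N.
  rewrite mul2n -addnn !expnD expnS expn1 -/P.
  by rewrite [(N * P)%N]mulnC (mulnAC P N P) -mulnA.
apply: leq_pexp2l => //.
have -> : (4 * c = 2 * c + 2 * c)%N by rewrite -mulnDl.
by rewrite leq_add2l -{1}(muln1 2%N) leq_pmul2l.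
Qed.

Local Close Scope R_scope.

From mathcomp Require Import ring lra.
Import GRing.Theory Num.Theory.

Lemma leq_expb a b e : a <= b -> a ^ e <= b ^ e.
Proof. by move=> H; elim: e => // e IH; rewrite !expnS leq_mul. Qed.

Lemma ffact_le_exp n g : n ^_ g <= n ^ g.
Proof.
elim: g n => [|g IH] n; first by rewrite ffactn0.
rewrite ffactnS expnS leq_mul2l; apply/orP; right.
apply: (leq_trans (IH _)); by apply: leq_expb; apply: leq_pred.
Qed.

Lemma bin_fact_le n g : 'C(n, g) * g`! <= n ^ g.
Proof. by rewrite bin_ffact ffact_le_exp. Qed.

Lemma mu_fact (mu k g : nat) : k <= g -> mu <= k.+1 -> mu ^ g * k`! <= mu ^ k * g`!.
Proof.
move=> Hkg Hmu; elim: g Hkg => [|g IH].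
  by rewrite leqn0 => /eqP ->.
rewrite leq_eqVlt => /orP [/eqP -> // | Hk].
have := IH Hk; rewrite factS expnS -mulnA => H.
apply: (leq_trans (leq_mul (leqnn mu) H)).
rewrite mulnCA leq_mul2l; apply/orP; right.
rewrite leq_mul2r; apply/orP; right.
by apply: (leq_trans Hmu); rewrite ltnS.
Qed.

Lemma count_sum_ord (X : eqType) (a : pred X) (x0 : X) (s : seq X) (D : nat) :
  size s <= D -> \sum_(i < D) ((i < size s) && a (nth x0 s i)) = count a s.
Proof.
elim: s D => [|x s IH] D /=.
  by move=> _; rewrite big1 // => i _.
case: D => [//|D] Hs; rewrite big_ord_recl /= -(IH D) //.
Qed.

Local Open Scope ring_scope.

Lemma prod_aux (e : rat) (N : nat) : 0 <= e -> (1+e)^+N * (1 - N%:R * e) <= 1.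
Proof.
move=> He; elim: N => [|N IH]; first by rewrite expr0 mul0r subr0 mulr1.
have Hp : 0 <= (1+e)^+N by apply: exprn_ge0; lra.
rewrite exprS -mulrA.
apply: order.Order.POrderTheory.le_trans IH.
rewrite -natr1.
have Hn : 0 <= (N%:R : rat) by rewrite ler0n.
have H2 : 0 <= (1 + e) ^+ N * (N%:R * e * e + e * e).
  by apply: mulr_ge0 => //; apply: addr_ge0; apply: mulr_ge0 => //; apply: mulr_ge0.
set P := (1 + e) ^+ N in Hp H2 *; set n := (N%:R : rat) in Hn H2 *.
have -> : (1 + e) * (P * (1 - (n + 1) * e)) = P * (1 - n * e) - P * (n * e * e + e * e) by ring.
lra.
Qed.

Lemma prod_bound (e : rat) (N : nat) : 0 <= e -> N%:R * e <= 1/2 -> (1+e)^+N <= 2.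
Proof.
move=> He HN; have := @prod_aux e N He.
have Hp : 0 <= (1+e)^+N by apply: exprn_ge0; lra.
set P := (1+e)^+N in Hp *; set n := (N%:R : rat) in HN *.
nra.
Qed.

Lemma key_rat (C mu Lr k g : nat) : (0 < Lr)%N ->
  (C * mu^g * k`! <= mu^k * Lr^g)%N ->
  C%:R * ((mu%:R / Lr%:R)^+g) <= (mu^k)%:R / (k`!)%:R :> rat.
Proof.
move=> HL H.
have HLg : 0 < (Lr%:R : rat)^+g by apply: exprn_gt0; rewrite ltr0n.
have Hk : 0 < ((k`!)%:R : rat) by rewrite ltr0n fact_gt0.
rewrite ler_pdivlMr // expr_div_n mulrA mulrAC ler_pdivrMr //.
by rewrite -!natrX -!natrM ler_nat.
Qed.

Lemma sum_sub_le (I : finType) (P Q : pred I) (F G : I -> rat) :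
  (forall i, P i -> Q i && (F i <= G i)) -> (forall i, Q i -> 0 <= G i) ->
  \sum_(i | P i) F i <= \sum_(i | Q i) G i.
Proof.
move=> H1 H2; rewrite big_mkcond [X in _ <= X]big_mkcond /=.
apply: ler_sum => i _; case HP: (P i).
  by have /andP [-> ->] := H1 i HP.
by case HQ: (Q i) => //; apply: H2.
Qed.

Local Close Scope ring_scope.

Section Core.
Variables (M T : finType) (sq : T -> seq M) (L l : nat).

Definition Lab := ('I_(2 * L) * M)%type.
Definition Pr := (T * 'I_(dilation sq))%type.

Definition Pm (m : M) : {set Pr} :=
  [set p : Pr | (p.2 < size (sq p.1)) && (nth m (sq p.1) p.2 == m)].
Definition validA (x : Lab) (A : {set Pr}) : bool :=
  (A \subset Pm x.2) && ((#|A| == 0) || (l < #|A|)).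
Definition Kf (B : {ffun Lab -> {set Pr}}) := \sum_(x : Lab) #|B x|.
Definition disj (B : {ffun Lab -> {set Pr}}) : bool :=
  [forall x : Lab, forall x' : Lab, forall p : Pr, forall p' : Pr,
    (p \in B x) ==> (p' \in B x') ==> (p.1 == p'.1) ==> ((x == x') && (p == p'))].
Definition validB (B : {ffun Lab -> {set Pr}}) : bool :=
  [&& [forall x, validA x (B x)], disj B & (#|T| < 2 * Kf B)].
Definition occ (f : {ffun T -> 'I_L}) (B : {ffun Lab -> {set Pr}}) : bool :=
  [forall x : Lab, forall p : Pr, (p \in B x) ==> (f p.1 + p.2 == x.1)].

Lemma step1 (f : {ffun T -> 'I_L}) : ~~ goodb sq L l f ->
  (l < #|T|) /\ exists B, validB B && occ f B.
Proof.
rewrite /goodb; case: excluded_middle_informative => // Hng _.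
have [B0 [[H1 H2 H3 H4] H5]] : exists B, bad_pattern sq L l B /\
   pattern_occurs sq L (fun j => nat_of_ord (f j)) B.
  by apply: Classical_Prop.NNPP => H; apply: Hng.
split.
  rewrite ltnNge; apply/negP => Hn.
  have H0 : forall t m, #|B0 t m| = 0.
    move=> t m; case: (H3 t m) => // /andP [Ha Hb].
    by have := leq_trans Ha (leq_trans Hb Hn); rewrite ltnn.
  move: H4; rewrite big1 ?muln0 // => t _; rewrite big1 // => m _; exact: H0.
exists [ffun x : Lab => B0 x.1 x.2].
apply/andP; split; last first.
  apply/forallP => x; apply/forallP => p; apply/implyP; rewrite ffunE => Hp.
  by apply/eqP; apply: (H5 _ _ _ Hp).
apply/and3P; split.
- apply/forallP => x; rewrite ffunE /validA; apply/andP; split.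
    apply/subsetP => p Hp; rewrite inE; have [Ha Hb] := H1 _ _ _ Hp.
    by rewrite Ha Hb eqxx.
  by case: (H3 x.1 x.2) => [->|/andP [-> _]] //; rewrite orbT.
- apply/forallP => x; apply/forallP => x'; apply/forallP => p; apply/forallP => p'.
  rewrite !ffunE; apply/implyP => Hp; apply/implyP => Hp'; apply/implyP => /eqP He.
  have [Ht Hm Hpp] := H2 _ _ _ _ _ _ Hp Hp' He.
  have -> : x = x' by move: Ht Hm; case: x {Hp} => t m; case: x' {Hp'} => t' m' /= -> ->.
  by rewrite Hpp !eqxx.
- rewrite /Kf; move: H4; congr (_ < 2 * _).
  rewrite (eq_bigr (fun x : Lab => #|B0 x.1 x.2|)); last by move=> x _; rewrite ffunE.
  by rewrite -(pair_big xpredT xpredT (fun t m => #|B0 t m|)).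
Qed.

Lemma step2 : #|[set f : {ffun T -> 'I_L} | ~~ goodb sq L l f]| <=
  \sum_(B | validB B) #|[set f : {ffun T -> 'I_L} | occ f B]|.
Proof.
rewrite -sum1dep_card.
apply: (@leq_trans (\sum_(f | ~~ goodb sq L l f) \sum_(B | validB B) (occ f B : nat))).
  apply: leq_sum => f Hf; have [_ [B /andP [HB Ho]]] := step1 f Hf.
  by rewrite (bigD1 B) //= Ho.
rewrite (exchange_big_dep validB) //=; apply: leq_sum => B HB.
rewrite -sum1dep_card big_mkcond /= [X in _ <= X]big_mkcond /=.
apply: leq_sum => f _; rewrite HB andbT.
by case: (occ f B); case: (~~ goodb sq L l f).
Qed.

Lemma step3 B : validB B ->
  #|[set f : {ffun T -> 'I_L} | occ f B]| * L ^ (Kf B) <= L ^ #|T|.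
Proof.
case/and3P => _ Hd _.
pose Q := [set xp : Lab * Pr | xp.2 \in B xp.1].
have HK : Kf B = #|Q|.
  rewrite /Kf -sum1dep_card (eq_bigr (fun x => \sum_(p | p \in B x) 1)); last first.
    by move=> x _; rewrite sum1_card.
  by rewrite (pair_big_dep xpredT (fun x p => p \in B x) (fun _ _ => 1)).
pose S := [set xp.2.1 | xp in Q].
have HS : #|S| = #|Q|.
  apply: card_in_imset => [[x p]] [x' p']; rewrite !inE /= => Hp Hp' He.
  move: Hd => /forallP /(_ x) /forallP /(_ x') /forallP /(_ p) /forallP /(_ p').
  rewrite Hp Hp' He eqxx /= => /andP [/eqP -> /eqP ->] //.
pose F := fun j : T => [pred y : 'I_L | [forall x : Lab, forall p : Pr,
   (p \in B x) ==> (p.1 == j) ==> (y + p.2 == x.1)]].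
have Hsub : [set f : {ffun T -> 'I_L} | occ f B] \subset family F.
  apply/subsetP => f; rewrite inE => /forallP Ho; apply/familyP => j.
  rewrite /F inE; apply/forallP => x; apply/forallP => p.
  apply/implyP => Hp; apply/implyP => /eqP <-.
  by move: (Ho x) => /forallP /(_ p); rewrite Hp.
have Hfam : #|family F| = \prod_j #|F j|.
  by rewrite card_family foldrE big_map big_enum.
rewrite HK -HS; apply: (@leq_trans (#|family F| * L ^ #|S|)).
  by rewrite leq_mul2r (subset_leq_card Hsub) orbT.
rewrite Hfam -prod_nat_const [X in _ * X]big_mkcond -big_split /=.
rewrite -[X in _ <= X ^ _]card_ord -prod_nat_const.
apply: leq_prod => j _.
case: ifP => HjS.
  idtac.
  rewrite card_ord -[X in _ <= X]mul1n leq_mul2r; apply/orP; right.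
  rewrite leqNgt; apply/negP => /card_gt1P [y [y' [Hy Hy' Hne]]].
  case/imsetP: HjS => [[x p]]; rewrite inE /= => Hp Hj.
  move: Hy Hy'; rewrite /F !inE => /forallP /(_ x) /forallP /(_ p) Hy.
  move=> /forallP /(_ x) /forallP /(_ p); rewrite Hp Hj eqxx /= in Hy *.
  move=> Hy'; move: Hne Hy Hy' => /eqP Hne /eqP Hy /eqP Hy'; apply: Hne.
  by apply: val_inj; apply/eqP; rewrite -(eqn_add2r p.2) Hy Hy'.
by rewrite muln1 card_ord; apply: (leq_trans (max_card _)); rewrite card_ord.
Qed.

Lemma Pm_card m : #|Pm m| <= congestion sq.
Proof.
rewrite /Pm -sum1dep_card.
rewrite (eq_bigl (fun p : Pr => true && ((p.2 < size (sq p.1)) && (nth m (sq p.1) p.2 == m)))) //.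
rewrite -(pair_big_dep xpredT (fun j (i : 'I_(dilation sq)) => (i < size (sq j)) && (nth m (sq j) i == m)) (fun _ _ => 1)) /=.
apply: (leq_trans _ (leq_bigmax (F := fun m => \sum_(j : T) count_mem m (sq j)) m)).
apply: leq_sum => j _.
rewrite big_mkcond /= -(@count_sum_ord _ (pred1 m) m _ (dilation sq)); last first.
  exact: (leq_bigmax (F := fun j => size (sq j)) j).
by apply: leq_sum => i _; case: ifP.
Qed.

Local Open Scope ring_scope.
Notation le_trans := order.Order.POrderTheory.le_trans.

Definition wq (q : nat) : rat := (q^2)%:R / L%:R.
Definition tau (q : nat) : rat := ((q^2)^(l.+1))%:R / ((l.+1)`!)%:R.

Lemma label_bound q x : (0 < L)%N -> (q^2 <= l)%N -> (congestion sq <= L)%N ->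
  \sum_(A | validA x A) (wq q)^+#|A| <= 1 + L.+1%:R * tau q.
Proof.
move=> HL Hq HC.
have Hw : 0 <= wq q by rewrite /wq divr_ge0 // ler0n.
have Ht : 0 <= tau q by rewrite /tau divr_ge0 // ler0n.
rewrite (bigID (fun A : {set Pr} => #|A| == 0%N)) /=.
apply: lerD.
  rewrite (big_pred1 set0) ?cards0 ?expr0 //.
  move=> A /=; rewrite cards_eq0; case: (A =P set0) => [->|_]; last by rewrite andbF.
  by rewrite /validA sub0set cards0 eqxx.
rewrite (partition_big (fun A : {set Pr} => (inord #|A| : 'I_L.+1)) xpredT) //=.
apply: (@le_trans _ _ (\sum_(g < L.+1) tau q)); last first.
  by rewrite sumr_const card_ord mulr_natl.
apply: ler_sum => g _.
have HA : forall A : {set Pr}, A \subset Pm x.2 -> (#|A| <= L)%N.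
  by move=> A Hs; apply: (leq_trans (subset_leq_card Hs)); apply: (leq_trans (Pm_card _)).
case: (ltnP l g) => Hlg; last first.
  rewrite big_pred0 // => A; apply/negP => /andP [/andP [/andP [Hs Hsz] Hnz] Hg].
  have HAg : #|A| = g by move/eqP: Hg => <-; rewrite inordK // ltnS HA.
  move: Hsz; rewrite (negbTE Hnz) /= HAg => H.
  by move: (leq_trans H Hlg); rewrite ltnn.
apply: (@le_trans _ _ (\sum_(A : {set Pr} | (A \subset Pm x.2) && (#|A| == g)) (wq q)^+g)).
  apply: sum_sub_le; last by move=> A _; apply: exprn_ge0.
  move=> A /andP [/andP [/andP [Hs Hsz] Hnz] Hg].
  have HAg : #|A| = g by move/eqP: Hg => <-; rewrite inordK // ltnS HA.
  by rewrite Hs HAg eqxx /=.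
rewrite sumr_const.
have -> : #|[pred A : {set Pr} | (A \subset Pm x.2) && (#|A| == g)]| =
   #|[set A : {set Pr} | A \subset Pm x.2 & #|A| == g]|.
  by apply: eq_card => A; rewrite inE.
rewrite cards_draws -mulr_natl /tau /wq.
apply: key_rat => //.
set mu := (q ^ 2)%N; set Cm := #|Pm x.2|.
idtac.
apply: (@leq_trans ('C(Cm, g) * (mu ^ l.+1 * g`!))%N).
  rewrite -mulnA leq_mul2l; apply/orP; right; apply: mu_fact => //.
  by apply: (leq_trans Hq); rewrite leqW // leqW.
rewrite mulnCA leq_mul2l; apply/orP; right.
apply: (leq_trans (bin_fact_le _ _)); apply: leq_expb.
exact: (leq_trans (Pm_card _)).
Qed.

Lemma core_rat q : (0 < L)%N -> (0 < q)%N -> (q^2 <= l)%N -> (congestion sq <= L)%N ->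
  (4 * L * L.+1 * #|M| * (q^2)^(l.+1) <= (l.+1)`!)%N ->
  (#|[set f : {ffun T -> 'I_L} | ~~ goodb sq L l f]| * q ^ #|T| <= 2 * L ^ #|T|)%N.
Proof.
move=> HL Hq0 Hq HC Hbig.
have Hw : 0 <= wq q by rewrite /wq divr_ge0 // ler0n.
have Ht : 0 <= tau q by rewrite /tau divr_ge0 // ler0n.
rewrite -(ler_nat rat) natrM.
have S2 := step2; rewrite -(ler_nat rat) natr_sum in S2.
apply: le_trans (ler_wpM2r (ler0n _ _) S2) _.
rewrite mulr_suml.
apply: (@le_trans _ _ (\sum_(B | validB B) (L ^ #|T|)%:R * (wq q)^+(Kf B))).
  apply: ler_sum => B HB.
  have H3 := step3 B HB.
  have Hqk : (q ^ #|T| <= (q ^ 2) ^ Kf B)%N.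
    rewrite -expnM; apply: leq_pexp2l => //.
    by case/and3P: HB => _ _ /ltnW; rewrite mulnC.
  have HLK : 0 < (L%:R : rat) ^+ Kf B by apply: exprn_gt0; rewrite ltr0n.
  rewrite /wq expr_div_n mulrA ler_pdivlMr // -!natrX -!natrM ler_nat.
  rewrite mulnAC; exact: leq_mul H3 Hqk.
rewrite -mulr_sumr natrM [X in X <= _]mulrC; apply: (ler_wpM2r (ler0n _ _)).
apply: (@le_trans _ _ (\sum_(B : {ffun Lab -> {set Pr}} | B \in family (fun x : Lab => (validA x : pred {set Pr}))) \prod_(x : Lab) (wq q)^+#|B x|)).
  apply: sum_sub_le.
    move=> B /and3P [/forallP HB _ _]; apply/andP; split.
      by apply/familyP => x; apply: HB.
    by rewrite /Kf expr_sum.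
  by move=> B _; apply: prodr_ge0 => x _; apply: exprn_ge0.
rewrite -(bigA_distr_big_dep (fun x : Lab => (validA x : pred {set Pr})) (fun (x : Lab) (A : {set Pr}) => (wq q)^+#|A|)).
apply: (@le_trans _ _ (\prod_(x : Lab) (1 + L.+1%:R * tau q))).
  apply: ler_prod => x _; apply/andP; split.
    by apply: sumr_ge0 => A _; apply: exprn_ge0.
  exact: label_bound.
rewrite prodr_const; apply: prod_bound.
  by apply: mulr_ge0 => //; apply: ler0n.
rewrite card_prod card_ord /tau.
set mu := (q ^ 2)%N in Hbig *.
have Hk : 0 < ((l.+1)`!)%:R :> rat by rewrite ltr0n fact_gt0.
have HX : (2 * (2 * L * #|M| * L.+1 * mu ^ l.+1) <= (l.+1)`!)%N.
  apply: leq_trans Hbig; rewrite !mulnA.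
  have -> : (2 * 2 * L * #|M| * L.+1 = 4 * L * L.+1 * #|M|)%N by ring.
  by [].
rewrite -(ler_nat rat) natrM in HX.
have -> : (2 * L * #|M|)%:R * (L.+1%:R * ((mu ^ l.+1)%:R / (l.+1)`!%:R)) =
   ((2 * L * #|M| * L.+1 * mu ^ l.+1)%N%:R : rat) / (l.+1)`!%:R.
  by rewrite !natrM; ring.
rewrite ler_pdivrMr //.
move: HX; set X := ((2 * L * #|M| * L.+1 * mu ^ l.+1)%N%:R : rat).
lra.
Qed.
End Core.

From mathcomp Require Import zify.
Local Open Scope R_scope.

Theorem lemma5p15 (M T : finType) (c : nat) (sq : T -> seq M)
    (ind : T -> 'I_(#|M| ^ c)) (L l : nat) :
  (1 <= c)%N -> (32 <= #|M|)%N ->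
  injective ind ->
  (#|T| <= #|M| ^ c)%N ->
  (congestion sq + dilation sq <= L)%N ->
  (L <= 2 * #|M| ^ c)%N ->
  (150 * INR c * ln (INR #|M|) / ln (ln (INR #|M|)) <= INR l) ->
  (prob_not_good sq L l <= exp (- (INR #|T| * ln (INR l)) / 8)).
Proof.
move=> Hc HN Hind HT HCD HL2 Hl.
rewrite /prob_not_good.
set bad := #|[set f : {ffun T -> 'I_L} | ~~ goodb sq L l f]|.
case: (posnP bad) => Hb.
  rewrite Hb /= /Rdiv Rmult_0_l; left; apply: exp_pos.
have [f Hf] : exists f, f \in [set f : {ffun T -> 'I_L} | ~~ goodb sq L l f].
  by apply/card_gt0P.
rewrite inE in Hf.
have [HlT _] := @step1 M T sq L l f Hf.
have Hl300 : (300 <= l)%N.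
  have H := l_big #|M| c l Hc HN Hl.
  have Hc1 : 1 <= INR c by rewrite -[1]/(INR 1); apply: le_INR; apply/leP.
  apply/leP; apply: INR_le; rewrite [INR 300]INR_lit /=; Lra.lra.
have HL0 : (0 < L)%N.
  case/card_gt0P: (leq_ltn_trans (leq0n l) HlT) => j _.
  exact: leq_ltn_trans (leq0n _) (ltn_ord (f j)).
have Hex : exists q, (2 * l <= q ^ 8)%N.
  exists (2 * l)%N; rewrite -{1}(expn1 (2 * l)%N); apply: leq_pexp2l => //.
  by rewrite muln_gt0 /= (leq_trans _ Hl300).
case: (ex_minnP Hex) => q Hq Hmin.
have Hq3 : (3 <= q)%N.
  rewrite leqNgt; apply/negP => H.
  have : (q ^ 8 <= 2 ^ 8)%N by apply: leq_expb; rewrite -ltnS.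
  move=> H2; have := leq_trans Hq H2.
  have : (600 <= 2 * l)%N by rewrite (@leq_pmul2l 2 300 l).
  move=> H3 H4; have := leq_trans H3 H4; by [].
have Hqm : ((q.-1) ^ 8 < 2 * l)%N.
  rewrite ltnNge; apply/negP => H; have := Hmin _ H.
  by case: q Hq3 {Hq Hmin H} => [|q] //=; rewrite ltnn.
have Hq52 : (q ^ 8 <= 52 * l)%N.
  have H1 : (2 * q <= 3 * q.-1)%N.
    by lia.
  have H2 := leq_expb _ _ 8 H1; rewrite !expnMn in H2.
  have H3 : (3 ^ 8 * q.-1 ^ 8 <= 3 ^ 8 * (2 * l))%N by rewrite leq_mul2l ltnW ?orbT.
  have H4 : (3 ^ 8 * (2 * l) <= 2 ^ 8 * (52 * l))%N.
    by rewrite !mulnA leq_mul2r; apply/orP; right.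
  have := leq_trans H2 (leq_trans H3 H4).
  by rewrite leq_pmul2l ?expn_gt0.
have Hq2 : (q ^ 2 <= l)%N.
  rewrite -(@leq_exp2r _ _ 4) // -expnM /=.
  apply: (leq_trans Hq52).
  have H52 : (52 <= l ^ 3)%N.
    apply: (@leq_trans l); first lia.
    by rewrite -{1}(expn1 l); apply: leq_pexp2l; lia.
  by rewrite (expnSr l 3) leq_mul2r H52 orbT.
have HC : (congestion sq <= L)%N by apply: leq_trans HCD; apply: leq_addr.
have Hbig : (4 * L * L.+1 * #|M| * (q ^ 2) ^ l.+1 <= (l.+1)`!)%N.
  apply: leq_trans (bigcond #|M| c l q Hc HN Hl Hq52).
  by rewrite -expnM leq_mul2r poly_bound ?orbT.
have Hcore := @core_rat M T sq L l q HL0 (leq_ltn_trans (leq0n 2) Hq3) Hq2 HC Hbig.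
apply: (@final_real _ _ q L l Hcore Hq _ HL0 _).
  by lia.
by lia.
Qed.
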